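(* Let $G(\mathcal V,\mathcal E)$ be a finite simple directed graph and $f\ge 0$ an integer, such that for every partition $X,Y,Z$ of $\mathcal V$ with $X,Y$ non-empty and $|Z|\le f$, either $X \Rightarrow_{\mathcal V - Z} Y$ or $Y \Rightarrow_{\mathcal V - Z} X$. Let $A,B,C,F$ be pairwise disjoint subsets of $\mathcal V$ with $|F|\le f$ and $A,B,C$ non-empty. If $A \Rightarrow_{\mathcal V - F} B$ and $A\cup B \Rightarrow_{\mathcal V - F} C$, then $A \Rightarrow_{\mathcal V - F} B\cup C$.
   Context: An $(X,y)$-path is a directed path from some node of $X$ to the node $y\notin X$; it excludes $F$ if it contains no node of $F$; $(X,y)$-paths are disjoint if they pairwise share only $y$. For pairwise disjoint $X,Y,F\subseteq\mathcal V$ with $|F|\le f$, $X \Rightarrow_{\mathcal V - F} Y$ means: $Y=\emptyset$, or every $y\in Y$ has at least $f+1$ pairwise disjoint $(X,y)$-paths excluding $F$. *)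

(* Defs.v *)
From mathcomp Require Import all_boot.
Set Implicit Arguments. Unset Strict Implicit. Unset Printing Implicit Defensive.

Definition XYpath (V : finType) (E : rel V) (X : {set V}) (y : V) (p : seq V) : bool :=
  if p is x :: s then [&& x \in X, path E x s, last x s == y & uniq p] else false.

Definition excludes (V : finType) (F : {set V}) (p : seq V) : bool :=
  all (fun v => v \notin F) p.

Definition disjoint_paths (V : finType) (y : V) (ps : seq (seq V)) : Prop :=
  forall i j, i < j -> j < size ps ->
    forall v, v \in nth [::] ps i -> v \in nth [::] ps j -> v = y.

Definition reach (V : finType) (E : rel V) (f : nat) (F X Y : {set V}) : Prop :=
  Y = set0 \/
  forall y, y \in Y ->
    exists ps : seq (seq V),
      [/\ f.+1 <= size ps,
          all (fun p => XYpath E X y p && excludes F p) ps &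
          disjoint_paths y ps].

(* Main.v *)
Require Import Defs.
From mathcomp Require Import all_boot.
From Stdlib Require Import Classical.
Set Implicit Arguments. Unset Strict Implicit. Unset Printing Implicit Defensive.

Section Gen.
Variable T : eqType.

Lemma first_cut (e : rel T) (P : pred T) h s : path e h s -> has P (h :: s) ->
  exists t, [/\ path e h t, P (last h t), ~~ has P (belast h t) & {subset t <= s}].
Proof.
elim: s h => [|z s IH] h /=.
  by rewrite orbF => _ Ph; exists [::]; split => //=; rewrite Ph.
case/andP=> ehz pz; case Ph: (P h) => /= Hs.
  by exists [::]; split => //=; rewrite Ph.
have [t [pt Pl nb sub]] := IH z pz Hs.
exists (z :: t); split => //=; first by rewrite ehz.
  by rewrite Ph.
by move=> w; rewrite !inE => /orP[->//|/sub ->]; rewrite orbT.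
Qed.

Lemma last_cut (e : rel T) (P : pred T) h s : path e h s -> has P (h :: s) ->
  exists h' t, [/\ h' \in h :: s, path e h' t, P h', ~~ has P t &
     ({subset t <= s} /\ last h' t = last h s)].
Proof.
elim: s h => [|z s IH] h /=.
  by rewrite orbF => _ Ph; exists h, [::]; split => //=; rewrite inE.
case/andP=> ehz pz; case Hs: (has P (z :: s)).
  have [h' [t [hin pt Ph' nt [sub el]]]] := IH z pz Hs.
  exists h', t; split => //; first by rewrite inE hin orbT.
  by split => // w /sub; rewrite inE => ->; rewrite orbT.
move=> /orP[Ph|Hs']; last by move: Hs; rewrite /= Hs'.
exists h, (z :: s); split => //=.
- by rewrite inE eqxx.
- by rewrite ehz.
- by move: Hs => /= ->.
- by split.
Qed.

Lemma first_before (e : rel T) (P : pred T) h s : path e h s -> ~~ P h -> P (last h s) ->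
  exists t z, [/\ path e h t, e (last h t) z, P z, ~~ has P (h :: t) & {subset t <= s}].
Proof.
elim: s h => [|z s IH] h /=; first by move=> _ /negbTE ->.
case/andP=> ehz pz nPh Pl; case Pz: (P z).
  by exists [::], z; split => //=; rewrite (negbTE nPh).
have [t [z' [pt ez' Pz' nh sub]]] := IH z pz (negbT Pz) Pl.
exists (z :: t), z'; split => //=.
- by rewrite ehz.
- by rewrite (negbTE nPh).
- by move=> w; rewrite inE => /orP[/eqP->|/sub Hw]; rewrite ?inE ?eqxx ?Hw ?orbT.
Qed.

Lemma memsplit (z : T) s : z \in s -> exists s1 s2, s = s1 ++ z :: s2.
Proof.
elim: s => [|a s IH] //; rewrite inE => /orP[/eqP->|/IH [s1 [s2 ->]]].
  by exists [::], s.
by exists (a :: s1), s2.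
Qed.

Lemma belast_split (h : T) t s1 z s2 : h :: t = s1 ++ z :: s2 ->
  belast h t = s1 ++ belast z s2.
Proof.
by rewrite lastI [z :: s2]lastI -rcons_cat => /rcons_inj [].
Qed.

End Gen.

Lemma list_choice (T1 T2 : Type) (x0 : T1) (y0 : T2) (ps : seq T1) (Rel : T1 -> T2 -> Prop) :
  (forall i, i < size ps -> exists q, Rel (nth x0 ps i) q) ->
  exists qs, size qs = size ps /\ forall i, i < size ps -> Rel (nth x0 ps i) (nth y0 qs i).
Proof.
elim: ps => [|p ps IH] H; first by exists [::].
have [q Hq] := H 0 erefl.
have [qs [sz Hqs]] : exists qs, size qs = size ps /\
   forall i, i < size ps -> Rel (nth x0 ps i) (nth y0 qs i).
  by apply: IH => i Hi; exact: (H i.+1 Hi).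
by exists (q :: qs); split; [rewrite /= sz | case].
Qed.

Section Menger.
Variable V : finType.
Implicit Types (E : rel V) (A B S : {set V}) (p q : seq V).

Definition Rc E : rel V := fun u v => (u == v) || E u v.
Definition walk E A B p :=
  if p is h :: t then [&& h \in A, path (Rc E) h t & last h t \in B] else false.
Definition disj p q := ~~ has (fun v => v \in q) p.
Notation meets S p := (has (fun v => v \in S) p).
Definition sepfree E A B k := forall S, #|S| < k -> exists p, walk E A B p && ~~ meets S p.
Definition linked E A B k ps := [/\ size ps = k,
  forall i, i < k -> walk E A B (nth [::] ps i) &
  forall i j, i < k -> j < k -> i != j -> disj (nth [::] ps i) (nth [::] ps j)].
Definition ecount E := #|[set uv : V * V | E uv.1 uv.2 & uv.1 != uv.2]|.
Definition dele E x y : rel V := fun u v => E u v && ((u, v) != (x, y)).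

Lemma meets_sub S p q : {subset p <= q} -> meets S p -> meets S q.
Proof. by move=> sub /hasP [w /sub wq wS]; apply/hasP; exists w. Qed.

Lemma disj_sub p q p' q' : {subset p' <= p} -> {subset q' <= q} -> disj p q -> disj p' q'.
Proof.
move=> s1 s2 /hasPn d; apply/hasPn => w /s1 /d; apply: contra; exact: s2.
Qed.

Lemma disjC p q : disj p q -> disj q p.
Proof. by move=> /hasPn d; apply/hasPn => w wp; apply/negP => /d; rewrite wp. Qed.

Lemma walk_of E A B p d : p != [::] -> head d p \in A -> sorted (Rc E) p -> last d p \in B ->
  walk E A B p.
Proof. by case: p => [|h t] //= _ -> -> ->. Qed.

Lemma noedge E A B k : ecount E = 0 -> sepfree E A B k -> exists ps, linked E A B k ps.
Proof.
move=> e0 sf.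
case: (posnP k) => [->|kpos]; first by exists [::]; split.
have Rid : forall u v, Rc E u v -> u = v.
  move=> u v /orP[/eqP//|Euv]; apply/eqP; apply/negPn/negP => nuv.
  have Hin : (u, v) \in [set uv : V * V | E uv.1 uv.2 & uv.1 != uv.2] by rewrite inE /= Euv nuv.
  by move/eqP: e0; rewrite cards_eq0 => /eqP H; rewrite H inE in Hin.
have plast : forall h t, path (Rc E) h t -> last h t = h.
  move=> h t; elim: t h => [//|z t IH] h /= /andP[/Rid -> /IH //].
have kle : k <= #|A :&: B|.
  rewrite leqNgt; apply/negP => /sf [[|h t] //= /andP[/and3P[hA pt lB] nm]].
  by move: lB nm; rewrite (plast _ _ pt) /= inE => hB; rewrite hA hB.
have [v0 _] : exists v0, v0 \in A :&: B by apply/set0Pn; rewrite -card_gt0 (leq_trans kpos).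
set s := take k (enum (A :&: B)).
have szs : size s = k by rewrite size_takel // -cardE.
have us : uniq s by rewrite take_uniq // enum_uniq.
exists [seq [:: v] | v <- s]; split.
- by rewrite size_map.
- move=> i ik; rewrite (nth_map v0) ?szs //=.
  have : nth v0 s i \in A :&: B by rewrite -mem_enum (@mem_take k) // mem_nth ?szs.
  by rewrite inE => /andP[-> ->].
- move=> i j ik jk nij; rewrite (nth_map v0) ?szs // (nth_map v0) ?szs //.
  by rewrite /disj /= inE orbF nth_uniq ?szs.
Qed.

Lemma path_noX E x y h t : path (Rc E) h t -> x \notin belast h t -> path (Rc (dele E x y)) h t.
Proof.
elim: t h => [//|z t IH] h /= /andP[Rhz pt]; rewrite inE negb_or => /andP[nhx nb].
rewrite IH // andbT; move: Rhz; rewrite /Rc /dele; case/orP => [->//|Ehz].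
by rewrite Ehz /= xpair_eqE (eq_sym h x) (negbTE nhx) orbT.
Qed.

Lemma path_noY E x y h t : path (Rc E) h t -> y \notin t -> path (Rc (dele E x y)) h t.
Proof.
elim: t h => [//|z t IH] h /= /andP[Rhz pt]; rewrite inE negb_or => /andP[nzy nb].
rewrite IH // andbT; move: Rhz; rewrite /Rc /dele; case/orP => [->//|Ehz].
by rewrite Ehz /= xpair_eqE (eq_sym z y) (negbTE nzy) andbF orbT.
Qed.

Definition ok1 E A (X : {set V}) p := if p is h :: t then
  [&& h \in A, path (Rc E) h t, last h t \in X & ~~ meets X (belast h t)] else false.
Definition ok2 E (X : {set V}) B q := if q is h :: t then
  [&& h \in X, path (Rc E) h t, last h t \in B & ~~ meets X t] else false.

Lemma KI E A B (Y X1 X2 : {set V}) (Ysep : forall p, walk E A B p -> meets Y p)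
  (sY1 : {subset Y <= X1}) (sY2 : {subset Y <= X2}) h t h2 t2 z :
  ok1 E A X1 (h :: t) -> ok2 E X2 B (h2 :: t2) -> z \in h :: t -> z \in h2 :: t2 ->
  [/\ z \in Y, z = last h t & z = h2].
Proof.
move=> /and4P[hA pt lX nb] /and4P[h2X pt2 lB nt2] zp zq.
have [s1 [s2 e1]] := memsplit zp; have [r1 [r2 e2]] := memsplit zq.
have bel := belast_split e1.
have r2t2 : {subset r2 <= t2}.
  by case: r1 e2 => [|a r1] /= [_ ->] // w wr; rewrite mem_cat inE wr !orbT.
have so1 : sorted (Rc E) (s1 ++ z :: s2) by rewrite -e1.
have so2 : sorted (Rc E) (r1 ++ z :: r2) by rewrite -e2.
have ll : last z r2 = last h2 t2.
  by move: (congr1 (last h2) e2) => /= ->; rewrite last_cat.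
have hd : head z (s1 ++ z :: r2) = h.
  by case: s1 e1 {bel so1} => [|a s1] /= [-> _].
have w : walk E A B (s1 ++ z :: r2).
  apply: (@walk_of _ _ _ _ z); first by case: s1 {e1 bel so1 hd}.
  - by rewrite hd.
  - by move: so1 so2; rewrite !sorted_cat_cons => /andP[-> _] /andP[_ ->].
  - by rewrite last_cat /= ll.
case/hasP: (Ysep _ w) => w0; rewrite mem_cat inE => /or3P[w0s1|/eqP->|w0r2] w0Y.
- by case/negP: nb; apply/hasP; exists w0; [rewrite bel mem_cat w0s1 | exact: sY1].
- have s20 : s2 = [::].
    case: s2 e1 bel so1 => [//|a s2] _ bel _; case/negP: nb; apply/hasP; exists z;
      [by rewrite bel mem_cat /= inE eqxx orbT | exact: sY1].
  have r10 : r1 = [::].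
    case: r1 e2 r2t2 {so2 ll} => [//|a r1] [_ et2] _; case/negP: nt2; apply/hasP; exists z;
      [by rewrite et2 mem_cat inE eqxx orbT | exact: sY2].
  split => //.
  - by move: (congr1 (last h) e1) => /=; rewrite s20 last_cat /= => ->.
  - by move: e2; rewrite r10 => [[->]].
- by case/negP: nt2; apply/hasP; exists w0; [exact: r2t2 | exact: sY2].
Qed.

Lemma menger n : forall E A B k, ecount E <= n -> sepfree E A B k -> exists ps, linked E A B k ps.
Proof.
elim: n => [|n IH] E A B k.
  by rewrite leqn0 => /eqP; exact: noedge.
move=> cE sf.
case: (posnP (ecount E)) => [e0|]; first exact: noedge e0 sf.
rewrite /ecount card_gt0 => /set0Pn [[x y]]; rewrite inE /= => /andP[Exy nxy].
set E' := dele E x y.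
have cE' : ecount E' <= n.
  rewrite /ecount.
  have -> : [set uv : V * V | E' uv.1 uv.2 & uv.1 != uv.2] =
            [set uv : V * V | E uv.1 uv.2 & uv.1 != uv.2] :\ (x, y).
    by apply/setP => [[u v]]; rewrite !inE /= /E' /dele; case: (E u v); case: ((u, v) != (x, y)).
  have H := cardsD1 (x, y) [set uv : V * V | E uv.1 uv.2 & uv.1 != uv.2].
  rewrite inE /= Exy nxy in H.
  by move: cE; rewrite /ecount H add1n ltnS.
have sE : subrel (Rc E') (Rc E).
  by move=> u v; rewrite /Rc /E' /dele => /orP[->//|/andP[-> _]]; rewrite orbT.
case: (classic (sepfree E' A B k)) => [sf'|nsf'].
  have [ps [sz wk dj]] := IH E' A B k cE' sf'.
  exists ps; split => // i ik; have := wk i ik.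
  by case: (nth [::] ps i) => [|h t] //= /and3P[-> pt ->]; rewrite (sub_path sE pt).
have [Y [Yk Ysep]] : exists Y : {set V}, #|Y| < k /\ forall p, walk E' A B p -> meets Y p.
  apply: NNPP => H; apply: nsf' => S Sk; apply: NNPP => H2; apply: H; exists S; split => // p wp.
  by apply/negPn/negP => nm; apply: H2; exists p; rewrite wp nm.
set X1 := x |: Y. set X2 := y |: Y.
have sY1 : {subset Y <= X1} by move=> w wY; rewrite !inE wY orbT.
have sY2 : {subset Y <= X2} by move=> w wY; rewrite !inE wY orbT.
have meetX1 : forall p, walk E A B p -> meets X1 p.
  case => [|h t] // /and3P[hA pt lB]; apply/negPn/negP => nm.
  have nx : x \notin belast h t.
    by apply/negP => /mem_belast xin; case/negP: nm; apply/hasP; exists x => //; rewrite !inE eqxx.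
  have wE' : walk E' A B (h :: t) by rewrite /= hA lB (@path_noX E x y h t pt nx).
  case/hasP: (Ysep _ wE') => w win wY.
  by case/negP: nm; apply/hasP; exists w => //; exact: sY1.
have meetX2 : forall p, walk E A B p -> meets X2 p.
  case => [|h t] // /and3P[hA pt lB]; apply/negPn/negP => nm.
  have ny : y \notin t.
    by apply/negP => yin; case/negP: nm; apply/hasP; exists y; [rewrite inE yin orbT | rewrite !inE eqxx].
  have wE' : walk E' A B (h :: t) by rewrite /= hA lB (@path_noY E x y h t pt ny).
  case/hasP: (Ysep _ wE') => w win wY.
  by case/negP: nm; apply/hasP; exists w => //; exact: sY2.
have [cX1 xY] : #|X1| = k /\ x \notin Y.
  have kX1 : k <= #|X1|.
    by rewrite leqNgt; apply/negP => /sf [p /andP[wp nm]]; move: nm; rewrite meetX1.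
  have xY : x \notin Y.
    by apply/negP => xY; move: kX1; rewrite /X1 cardsU1 xY /= add0n leqNgt Yk.
  split => //; apply/eqP; rewrite eqn_leq kX1 andbT /X1 cardsU1 xY add1n; exact: Yk.
have [cX2 yY] : #|X2| = k /\ y \notin Y.
  have kX2 : k <= #|X2|.
    by rewrite leqNgt; apply/negP => /sf [p /andP[wp nm]]; move: nm; rewrite meetX2.
  have yY : y \notin Y.
    by apply/negP => yY; move: kX2; rewrite /X2 cardsU1 yY /= add0n leqNgt Yk.
  split => //; apply/eqP; rewrite eqn_leq kX2 andbT /X2 cardsU1 yY add1n; exact: Yk.
have sf1 : sepfree E' A X1 k.
  move=> S Sk; have [[|h t] //= /andP[/and3P[hA pt lB] nm]] := sf S Sk.
  have hm : has (fun v => v \in X1) (h :: t) by apply: meetX1; rewrite /= hA pt lB.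
  have [t' [pt' l1 nb sub]] := first_cut pt hm.
  have nx : x \notin belast h t'.
    by apply/negP => xb; case/negP: nb; apply/hasP; exists x; rewrite // !inE eqxx.
  exists (h :: t'); rewrite /= hA l1 (@path_noX E x y h t' pt' nx) /=.
  change (~~ meets S (h :: t')); have nm' : ~~ meets S (h :: t) := nm; apply: contra nm'; apply: meets_sub => w; rewrite !inE => /orP[->//|/sub ->]; by rewrite orbT.
have sf2 : sepfree E' X2 B k.
  move=> S Sk; have [[|h t] //= /andP[/and3P[hA pt lB] nm]] := sf S Sk.
  have hm : has (fun v => v \in X2) (h :: t) by apply: meetX2; rewrite /= hA pt lB.
  have [h' [t' [hin pt' h'X nt [sub ll]]]] := last_cut pt hm.
  have ny : y \notin t'.
    by apply/negP => yt; case/negP: nt; apply/hasP; exists y; rewrite // !inE eqxx.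
  exists (h' :: t'); rewrite /= h'X ll lB (@path_noY E x y h' t' pt' ny) /=.
  change (~~ meets S (h' :: t')); have nm' : ~~ meets S (h :: t) := nm; apply: contra nm'; apply: meets_sub => w; rewrite inE => /orP[/eqP->//|/sub Hw]; by rewrite inE Hw orbT.
have [Ps [szP wP dP]] := IH E' A X1 k cE' sf1.
have [Qs [szQ wQ dQ]] := IH E' X2 B k cE' sf2.
have [Ps' [szP' okP]] : exists Ps', size Ps' = size Ps /\ forall i, i < size Ps ->
   (fun p p' => ok1 E' A X1 p' /\ {subset p' <= p}) (nth [::] Ps i) (nth [::] Ps' i).
  apply: (@list_choice _ _ [::] [::] Ps (fun p p' => ok1 E' A X1 p' /\ {subset p' <= p})) => i; rewrite szP => ik; have := wP i ik.
  case: (nth [::] Ps i) => [|h t] //= /and3P[hA pt lX].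
  have hm : has (fun v => v \in X1) (h :: t) by apply/hasP; exists (last h t); rewrite ?mem_last.
  have [t' [pt' l1 nb sub]] := first_cut pt hm.
  exists (h :: t'); split; first by rewrite /= hA pt' l1 /=; exact: nb.
  by move=> w; rewrite !inE => /orP[->//|/sub ->]; rewrite orbT.
have [Qs' [szQ' okQ]] : exists Qs', size Qs' = size Qs /\ forall i, i < size Qs ->
   (fun p p' => ok2 E' X2 B p' /\ {subset p' <= p}) (nth [::] Qs i) (nth [::] Qs' i).
  apply: (@list_choice _ _ [::] [::] Qs (fun p p' => ok2 E' X2 B p' /\ {subset p' <= p})) => i; rewrite szQ => ik; have := wQ i ik.
  case: (nth [::] Qs i) => [|h t] //= /and3P[hX pt lB].
  have hm : has (fun v => v \in X2) (h :: t) by rewrite /= hX.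
  have [h' [t' [hin pt' h'X nt [sub ll]]]] := last_cut pt hm.
  exists (h' :: t'); split; first by rewrite /= h'X pt' ll lB /=; exact: nt.
  move=> w; rewrite inE => /orP[/eqP->//|/sub Hw]; by rewrite inE Hw orbT.
rewrite szP in szP' okP; rewrite szQ in szQ' okQ.
have okP' : forall i, i < k -> ok1 E' A X1 (nth [::] Ps' i) by move=> i ik; case: (okP i ik).
have okQ' : forall i, i < k -> ok2 E' X2 B (nth [::] Qs' i) by move=> i ik; case: (okQ i ik).
have dP' : forall i j, i < k -> j < k -> i != j -> disj (nth [::] Ps' i) (nth [::] Ps' j).
  move=> i j ik jk nij; have [_ s1] := okP i ik; have [_ s2] := okP j jk.
  exact: disj_sub s1 s2 (dP i j ik jk nij).
have dQ' : forall i j, i < k -> j < k -> i != j -> disj (nth [::] Qs' i) (nth [::] Qs' j).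
  move=> i j ik jk nij; have [_ s1] := okQ i ik; have [_ s2] := okQ j jk.
  exact: disj_sub s1 s2 (dQ i j ik jk nij).
set tgt := fun v => if v == x then y else v.
set Hs := map (head x) Qs'.
have szHs : size Hs = k by rewrite size_map szQ'.
have nthHs : forall j, j < k -> nth x Hs j = head x (nth [::] Qs' j).
  by move=> j jk; rewrite (nth_map [::]) // szQ'.
have uHs : uniq Hs.
  apply/negPn/negP => /(uniqPn x) [i [j [ij jk e]]]; rewrite szHs in jk.
  have ik := ltn_trans ij jk; have nij : i != j by rewrite neq_ltn ij.
  move: e; rewrite !nthHs //.
  move: (okQ' i ik) (okQ' j jk) (dQ' i j ik jk nij).
  case: (nth [::] Qs' i) => [|a qa] //; case: (nth [::] Qs' j) => [|b qb] // _ _.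
  by rewrite /disj /= inE => d e; move: d; rewrite e eqxx.
have HsX2 : {subset Hs <= enum X2}.
  move=> v /mapP [q /(nthP [::]) [j jk <-] ->]; rewrite szQ' in jk; move: (okQ' j jk).
  by case: (nth [::] Qs' j) => [|a qa] //= /and4P[aX _ _ _]; rewrite mem_enum.
have szle : size (enum X2) <= size Hs by rewrite -cardE cX2 szHs.
have [_ eqm] := uniq_min_size uHs HsX2 szle.
have covHs : forall v, v \in X2 -> v \in Hs by move=> v vX; rewrite eqm mem_enum.
have tgtX : forall v, v \in X1 -> tgt v \in X2.
  move=> v; rewrite /tgt !inE; case: (v =P x) => [_ _|_ /= vY]; by rewrite ?eqxx ?vY ?orbT.
have tgtY : forall w, w \in Y -> tgt w = w.
  by move=> w wY; rewrite /tgt; case: eqP => // wx; rewrite wx (negbTE xY) in wY.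
have tgtinj : forall u v, u \in X1 -> v \in X1 -> tgt u = tgt v -> u = v.
  move=> u v; rewrite /tgt !inE; case: (u =P x) => [->|nux]; case: (v =P x) => [->|nvx] //=.
  - by move=> _ vY e; rewrite -e (negbTE yY) in vY.
  - by move=> uY _ e; rewrite e (negbTE yY) in uY.
set sg := fun i => index (tgt (last x (nth [::] Ps' i))) Hs.
have lX : forall i, i < k -> last x (nth [::] Ps' i) \in X1.
  by move=> i ik; move: (okP' i ik); case: (nth [::] Ps' i) => [|a pa] //= /and4P[_ _ -> _].
have sgk : forall i, i < k -> sg i < k /\ head x (nth [::] Qs' (sg i)) = tgt (last x (nth [::] Ps' i)).
  move=> i ik; have inH := covHs _ (tgtX _ (lX i ik)).
  have sk : sg i < k by rewrite -szHs index_mem.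
  by split => //; rewrite -nthHs //; exact: nth_index.
have lastin : forall i, i < k -> last x (nth [::] Ps' i) \in nth [::] Ps' i.
  by move=> i ik; move: (okP' i ik); case: (nth [::] Ps' i) => [|a pa] // _ /=; exact: mem_last.
have lastinj : forall i j, i < k -> j < k -> i != j ->
    last x (nth [::] Ps' i) != last x (nth [::] Ps' j).
  move=> i j ik jk nij; apply/negP => /eqP e.
  move/hasPn: (dP' i j ik jk nij) => /(_ _ (lastin i ik)); by rewrite e lastin.
have KI' : forall i j w, i < k -> j < k -> w \in nth [::] Ps' i -> w \in nth [::] Qs' j ->
    [/\ w \in Y, w = last x (nth [::] Ps' i) & w = head x (nth [::] Qs' j)].
  move=> i j w ik jk; move: (okP' i ik) (okQ' j jk).
  case: (nth [::] Ps' i) => [|h t] //; case: (nth [::] Qs' j) => [|h2 t2] //.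
  exact: (KI Ysep sY1 sY2).
have cross : forall i j w, i < k -> j < k -> i != j -> w \in nth [::] Ps' i ->
    w \in nth [::] Qs' (sg j) -> False.
  move=> i j w ik jk nij wp wq; have [sj hj] := sgk j jk.
  have [wY e1 e2] := KI' i (sg j) w ik sj wp wq.
  have : last x (nth [::] Ps' i) = last x (nth [::] Ps' j).
    by apply: tgtinj; [exact: lX | exact: lX | rewrite -e1 tgtY // e2 hj].
  by move/eqP; apply/negP; exact: lastinj.
exists (mkseq (fun i => nth [::] Ps' i ++ nth [::] Qs' (sg i)) k); split.
- exact: size_mkseq.
- move=> i ik; rewrite nth_mkseq //.
  have [sk hq] := sgk i ik.
  move: (okP' i ik) (okQ' _ sk) hq; case: (nth [::] Ps' i) => [|h t] //.
  case: (nth [::] Qs' (sg i)) => [|h2 t2] //=.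
  move=> /and4P[hA pt lX1 _] /and4P[_ pt2 lB _] hq.
  rewrite hA cat_path (sub_path sE pt) /= last_cat /= lB (sub_path sE pt2) !andbT hq /tgt.
  by case: eqP => [->|_]; rewrite /Rc ?Exy ?eqxx ?orbT.
- move=> i j ik jk nij; rewrite !nth_mkseq //.
  have [si hi] := sgk i ik; have [sj hj] := sgk j jk.
  apply/hasPn => w; rewrite mem_cat => /orP[wpi|wqi]; apply/negP; rewrite mem_cat => /orP[wpj|wqj].
  + by move/hasPn: (dP' i j ik jk nij) => /(_ _ wpi); rewrite wpj.
  + exact: (cross i j w).
  + by apply: (cross j i w) => //; rewrite eq_sym.
  + have nsg : sg i != sg j.
      apply/negP => /eqP e; move: hi; rewrite e hj => /tgtinj e'.
      by move/negP: (lastinj i j ik jk nij); apply; rewrite e' // lX.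
    by move/hasPn: (dQ' _ _ si sj nsg) => /(_ _ wqi); rewrite wqj.
Qed.


End Menger.

Section Final.
Variable V : finType.

Lemma pigeon (ps : seq (seq V)) y (T : {set V}) f :
  f.+1 <= size ps -> disjoint_paths y ps -> #|T| <= f ->
  exists2 p, p \in ps & ~~ has (fun v => v \in T :\ y) p.
Proof.
move=> szp dps Tf.
case: (boolP (has (fun p => ~~ has (fun v => v \in T :\ y) p) ps)) => [/hasP [p pin np]|/hasPn allm].
  by exists p.
exfalso.
pose g i := nth y (nth [::] ps i) (find (fun v => v \in T :\ y) (nth [::] ps i)).
have hasi : forall i, i < size ps -> has (fun v => v \in T :\ y) (nth [::] ps i).
  by move=> i ip; move: (allm _ (mem_nth [::] ip)); rewrite negbK.
have gin : forall i, i < size ps -> g i \in nth [::] ps i.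
  by move=> i ip; rewrite /g mem_nth // -has_find hasi.
have gT : forall i, i < size ps -> g i \in T :\ y.
  by move=> i ip; rewrite /g; apply: (nth_find y (hasi i ip)).
have ginj : {in iota 0 f.+1 &, injective g}.
  move=> i j; rewrite !mem_iota /= !add0n => ik jk e.
  have ip : i < size ps := leq_trans ik szp; have jp : j < size ps := leq_trans jk szp.
  case: (ltngtP i j) => [ij|ji|//].
  - have := dps i j ij jp (g i) (gin i ip); rewrite e => /(_ (gin j jp)) gy.
    by move: (gT j jp); rewrite gy !inE eqxx.
  - have := dps j i ji ip (g j) (gin j jp); rewrite -e => /(_ (gin i ip)) gy.
    by move: (gT i ip); rewrite gy !inE eqxx.
have u : uniq (map g (iota 0 f.+1)) by rewrite map_inj_in_uniq // iota_uniq.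
have sub : {subset map g (iota 0 f.+1) <= enum (T :\ y)}.
  move=> v /mapP [i]; rewrite mem_iota add0n /= => ik ->; rewrite mem_enum.
  exact: gT (leq_trans ik szp).
have := uniq_leq_size u sub; rewrite size_map size_iota -cardE.
move=> H; have := leq_trans H (leq_trans (subset_leq_card (subsetDl T [set y])) Tf).
by rewrite ltnn.
Qed.

Definition R2 (E : rel V) : rel V := fun u v => (u == v) || E u v.

Lemma uniq_pathE (E : rel V) h t : path (R2 E) h t -> uniq (h :: t) -> path E h t.
Proof.
elim: t h => [//|z t IH] h /= /andP[Rhz pt] /andP[nh ut].
rewrite IH //; move: Rhz; rewrite /R2 => /orP[/eqP hz|->//].
by move: nh; rewrite hz inE eqxx.
Qed.

Lemma allnF (E : rel V) (F' : {set V}) h t :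
  path (Rc (fun u v => [&& E u v, u \notin F' & v \notin F'])) h t -> h \notin F' ->
  all (fun v => v \notin F') (h :: t).
Proof.
elim: t h => [|z t IH] h /=; first by move=> _ ->.
move=> /andP[Rhz pt] hF; rewrite hF /=.
have zF : z \notin F'.
  by move: Rhz; rewrite /Rc => /orP[/eqP <-//|/and3P[_ _ ->]].
exact: IH z pt zF.
Qed.

Lemma allE (E : rel V) (F' : {set V}) h t : path E h t -> all (fun v => v \notin F') (h :: t) ->
  path (Rc (fun u v => [&& E u v, u \notin F' & v \notin F'])) h t.
Proof.
elim: t h => [//|z t IH] h /= /andP[Ehz pt] /and3P[hF zF al].
by rewrite IH /= ?zF ?al // /Rc Ehz hF zF orbT.
Qed.

End Final.

Lemma shorten_sub (T : eqType) (x : T) p : {subset shorten x p <= p}.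
Proof.
have H : path (fun _ _ => true) x p by elim: p x => //= a p IH x; exact: IH.
by case: (shortenP H) => p' _ _ sub.
Qed.

Theorem lemma8 (V : finType) (E : rel V) (f : nat)
  (Hsimple : forall v, ~~ E v v)
  (Hcond : forall X Y Z : {set V},
      [disjoint X & Y] -> [disjoint X & Z] -> [disjoint Y & Z] ->
      X :|: Y :|: Z = setT -> X != set0 -> Y != set0 -> #|Z| <= f ->
      reach E f Z X Y \/ reach E f Z Y X)
  (A B C F : {set V})
  (dAB : [disjoint A & B]) (dAC : [disjoint A & C]) (dAF : [disjoint A & F])
  (dBC : [disjoint B & C]) (dBF : [disjoint B & F]) (dCF : [disjoint C & F])
  (HF : #|F| <= f) (HA : A != set0) (HB : B != set0) (HC : C != set0) :
  reach E f F A B -> reach E f F (A :|: B) C -> reach E f F A (B :|: C).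
Proof.
move=> rAB rABC; right => c; rewrite inE => /orP[cB|cC].
  case: rAB => [B0|H]; last exact: H c cB.
  by move: HB; rewrite B0 eqxx.
set F' := c |: F.
set Ev := fun u v => [&& E u v, u \notin F' & v \notin F'].
set A' := A :\: F'.
set B' := [set b | E b c & b \notin F'].
have cF : c \notin F by rewrite (disjointFr dCF cC).
have aNF : forall a, a \in A -> a \notin F'.
  move=> a aA; rewrite !inE negb_or (disjointFr dAF aA) andbT.
  by apply/negP => /eqP ac; move: cC; rewrite -ac (disjointFr dAC aA).
have sepl : forall S a s, a \in A -> path E a s -> last a s = c ->
    all (fun v => v \notin F) (a :: s) ->
    ~~ has (fun v => v \in S :\ c) (a :: s) -> exists p, walk Ev A' B' p && ~~ has (fun v => v \in S) p.
  move=> S a s aA pa la al ns.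
  have nac : ~~ (a == c) by move: (aNF a aA); rewrite !inE negb_or => /andP[].
  have lac : (fun v => v == c) (last a s) by rewrite /= la.
  have [t [z [pt ez zc nh sub]]] :=
    @first_before _ E (fun v => v == c) a s pa nac lac.
  have tin : forall w, w \in a :: t -> w \in a :: s.
    by move=> w; rewrite !inE => /orP[->//|/sub ->]; rewrite orbT.
  have alF : all (fun v => v \notin F') (a :: t).
    apply/allP => w wt; rewrite !inE negb_or.
    have -> : (w == c) = false.
      by apply/negP => /eqP wc; case/negP: nh; apply/hasP; exists w => //; apply/eqP.
    by have := allP al w (tin w wt).
  exists (a :: t); apply/andP; split.
  - apply/and3P; split.
    + by rewrite /A' in_setD (aNF a aA) aA.
    + exact: allE pt alF.
    + rewrite /B' inE -(eqP zc) ez /=; exact: (allP alF _ (mem_last a t)).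
  - apply/hasPn => w wt; apply/negP => wS.
    have wc : w != c by move: (allP alF w wt); rewrite !inE negb_or => /andP[].
    by move/hasPn: ns => /(_ w (tin w wt)); rewrite !inE wc wS.
have sf : sepfree Ev A' B' f.+1.
  move=> S Sk; apply: NNPP => Hn.
  have Sf : #|S| <= f by rewrite -ltnS.
  case: rABC => [C0|H]; first by move: HC; rewrite C0 eqxx.
  have [ps [szps allps dps]] := H c cC.
  have [p pin np] := pigeon szps dps Sf.
  move/allP: allps => /(_ p pin) /andP[xy ex].
  case: p xy ex np {pin} => [|a s] // /and4P[aAB pa la ua] ex np.
  rewrite inE in aAB; case/orP: aAB => [aA|aB].
    by apply: Hn; apply: (sepl S a s aA pa (eqP la) ex np).
  case: rAB => [B0|HB']; first by move: HB; rewrite B0 eqxx.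
  have [rs [szr allr dr]] := HB' a aB.
  have [r rin nr] := pigeon szr dr Sf.
  move/allP: allr => /(_ r rin) /andP[xy2 ex2].
  case: r xy2 ex2 nr {rin} => [|a' r'] // /and4P[a'A pr' lr' _] ex2 nr.
  apply: Hn; apply: (sepl S a' (r' ++ s) a'A).
  - by rewrite cat_path pr' (eqP lr') pa.
  - by rewrite last_cat (eqP lr') (eqP la).
  - by move: ex2 ex; rewrite /excludes /= all_cat => /andP[-> ->] /andP[_ ->].
  - apply/hasPn => w; rewrite -cat_cons mem_cat => /orP[wr|ws].
    + apply/negP => wSc.
      have wS : w \in S by move: wSc; rewrite !inE => /andP[_ ->].
      have wa : w = a.
        by apply/eqP; move/hasPn: nr => /(_ w wr); rewrite !inE wS andbT negbK.
      by move/hasPn: np => /(_ a (mem_head a s)); rewrite -wa wSc.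
    + by move/hasPn: np => /(_ w); apply; rewrite inE ws orbT.
have [qs [szq wq dq]] := @menger _ (ecount Ev) Ev A' B' f.+1 (leqnn _) sf.
pose fin q := if q is h :: t then h :: shorten h (t ++ [:: c]) else [::].
have finsub : forall q w, w \in fin q -> (w \in q) \/ w = c.
  case => [|h t] w //=; rewrite inE => /orP[/eqP->|/shorten_sub]; first by left; exact: mem_head.
  by rewrite mem_cat inE => /orP[wt|/eqP->]; [left; rewrite inE wt orbT | right].
exists (map fin qs); split.
- by rewrite size_map szq.
- apply/allP => p /(nthP [::]) [i]; rewrite size_map szq => ik <-; rewrite (nth_map [::]) ?szq //.
  move: (wq i ik); case: (nth [::] qs i) => [|h t] // /and3P[hA' pt lB].
  have hA : h \in A by move: hA'; rewrite /A' in_setD => /andP[_ ->].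
  have hF' : h \notin F' by move: hA'; rewrite /A' in_setD => /andP[-> _].
  have al := allnF pt hF'.
  have nF : forall w, w \in h :: t -> w \notin F.
    by move=> w wt; have := allP al w wt; rewrite !inE negb_or => /andP[_ ->].
  have pR : path (R2 E) h (t ++ [:: c]).
    rewrite cat_path /= andbT; apply/andP; split.
    + apply: sub_path pt => u v; rewrite /Rc /R2 => /orP[->//|/and3P[-> _ _]]; by rewrite orbT.
    + by move: lB; rewrite /B' inE /R2 => /andP[-> _]; rewrite orbT.
  have lc : last h (t ++ [:: c]) = c by rewrite last_cat.
  rewrite /fin; move: lc; case: (shortenP pR) => p' pp up sub lc.
  rewrite /XYpath /excludes /= hA lc eqxx (uniq_pathE pp up) /=.
  move: up => /= ->; rewrite (nF h (mem_head h t)) /=.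
  apply/allP => w /sub; rewrite mem_cat inE => /orP[wt|/eqP->//].
  by apply: nF; rewrite inE wt orbT.
- move=> i j ij; rewrite size_map => jq v.
  have iq := ltn_trans ij jq.
  rewrite !(nth_map [::]) // => /finsub [vi|->//] /finsub [vj|->//].
  have nij : i != j by rewrite neq_ltn ij.
  rewrite szq in iq jq.
  by move/hasPn: (dq i j iq jq nij) => /(_ v vi); rewrite vj.
Qed.
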